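(* For every positive integer $k$, every real $0\le\gamma\le1$ and every real $x\ge k$, $$\sum_{i=0}^k\binom{x}{i}\gamma^i\ \ge\ \frac14\Big(\sum_{i=0}^k\binom{x}{i}\Big)^{\log_2(1+\gamma)}.$$
   Context: For real $y$ and integer $i\ge0$, $\binom{y}{i}=y(y-1)\cdots(y-i+1)/i!$. *)

(* Defs.v *)
From Stdlib Require Import Reals Arith Factorial.
Open Scope R_scope.

Fixpoint falling (y : R) (i : nat) : R :=
  match i with
  | O => 1
  | S j => falling y j * (y - INR j)
  end.

Definition binomR (y : R) (i : nat) : R := falling y i / INR (fact i).

Definition log2 (t : R) : R := ln t / ln 2.

(* Main.v *)
Require Import Defs.
From Stdlib Require Import Reals Lra Lia Factorial.
From Coquelicot Require Import Coquelicot.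
Open Scope R_scope.

Definition PP (x : R) (k : nat) (t : R) := sum_f_R0 (fun i => binomR x i * t ^ i) k.

Lemma falling_S1 (x : R) (n : nat) : falling x (S n) = x * falling (x - 1) n.
Proof.
  induction n as [|n IH].
  - simpl. ring.
  - change (falling x (S (S n))) with (falling x (S n) * (x - INR (S n))).
    rewrite IH. change (falling (x-1) (S n)) with (falling (x-1) n * (x - 1 - INR n)).
    rewrite S_INR. ring.
Qed.

Lemma B1 (x : R) (n : nat) : INR (S n) * binomR x (S n) = x * binomR (x - 1) n.
Proof.
  unfold binomR. rewrite falling_S1.
  change (Factorial.fact (S n)) with (S n * Factorial.fact n)%nat. rewrite mult_INR.
  assert (H1 := INR_fact_neq_0 n). assert (H2 : INR (S n) <> 0) by (apply not_0_INR; lia).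
  field. split; auto.
Qed.

Lemma B2 (x : R) (n : nat) : binomR x (S n) - binomR (x - 1) (S n) = binomR (x - 1) n.
Proof.
  unfold binomR. rewrite falling_S1.
  change (falling (x-1) (S n)) with (falling (x-1) n * (x - 1 - INR n)).
  change (Factorial.fact (S n)) with (S n * Factorial.fact n)%nat. rewrite mult_INR.
  assert (H1 := INR_fact_neq_0 n). assert (H2 : INR (S n) <> 0) by (apply not_0_INR; lia).
  rewrite S_INR in *. field. split; auto.
Qed.

Lemma binom0 (x : R) : binomR x 0 = 1.
Proof. unfold binomR. simpl. field. Qed.

Lemma deriv_PP (x : R) (k : nat) (g : R) : 1 + g <> 0 ->
  is_derive (PP x k) g (x * (PP x k g - binomR (x - 1) k * g ^ k) / (1 + g)).
Proof.
  intro Hg. induction k as [|k IH].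
  - unfold PP. simpl. rewrite !binom0.
    replace (x * (1 * 1 - 1 * 1) / (1 + g)) with 0 by (field; auto).
    auto_derive; [exact I | ring].
  - assert (Ht : is_derive (fun t => binomR x (S k) * t ^ (S k)) g
              (binomR x (S k) * (INR (S k) * 1 * g ^ (Init.Nat.pred (S k))))).
    { auto_derive; [exact I | simpl; ring]. }
    assert (H := is_derive_plus _ _ _ _ _ IH Ht).
    match type of H with is_derive _ _ ?l =>
      replace l with (x * (PP x (S k) g - binomR (x - 1) (S k) * g ^ (S k)) / (1 + g)) in H end;
    [exact H|].
    match goal with |- _ = plus ?a ?b => change (plus a b) with (a + b) end. unfold PP. simpl sum_f_R0.
      assert (E1 := B1 x k). assert (E2 := B2 x k).
      replace (binomR (x - 1) (S k)) with (binomR x (S k) - binomR (x - 1) k) by lra.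
      replace (binomR x (S k) * (INR (S k) * 1 * g ^ Init.Nat.pred (S k))) with ((INR (S k) * binomR x (S k)) * g ^ k) by (simpl pred; ring).
      rewrite E1. change (g ^ S k) with (g * g ^ k). field. auto.
Qed.

Lemma falling_nonneg (y : R) (n : nat) : INR n <= y + 1 -> 0 <= falling y n.
Proof.
  induction n as [|n IH]; intro H.
  - simpl; lra.
  - simpl. rewrite S_INR in H. apply Rmult_le_pos.
    + apply IH. pose proof (pos_INR n). lra.
    + lra.
Qed.

Lemma binom_nonneg (y : R) (n : nat) : INR n <= y + 1 -> 0 <= binomR y n.
Proof.
  intro H. unfold binomR. apply Rmult_le_pos. now apply falling_nonneg.
  apply Rlt_le, Rinv_0_lt_compat. apply lt_0_INR, lt_O_fact.
Qed.

Lemma PP_ge1 (x : R) (k : nat) (t : R) : INR k <= x -> 0 <= t -> forall j, (j <= k)%nat -> 1 <= PP x j t.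
Proof.
  intros Hk Ht j. induction j as [|j IH]; intro Hj.
  - unfold PP; simpl. rewrite binom0. lra.
  - unfold PP in *; simpl. assert (1 <= sum_f_R0 (fun i => binomR x i * t ^ i) j) by (apply IH; lia).
    assert (0 <= binomR x (S j) * (t * t ^ j)).
    { apply Rmult_le_pos. apply binom_nonneg. apply le_INR in Hj. lra.
      apply Rmult_le_pos; auto. apply pow_le; auto. }
    lra.
Qed.

Lemma PP_0 (x : R) (j : nat) : PP x j 0 = 1.
Proof.
  induction j as [|j IH]; unfold PP in *; simpl.
  - rewrite binom0; ring.
  - rewrite IH. ring.
Qed.

Lemma cross (x : R) (k : nat) (t1 t2 : R) : INR k <= x -> 0 <= t1 <= t2 ->
  forall j, (j <= k)%nat -> t1 ^ k * PP x j t2 <= t2 ^ k * PP x j t1.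
Proof.
  intros Hk Ht j. induction j as [|j IH]; intro Hj.
  - unfold PP; simpl. rewrite binom0. assert (t1 ^ k <= t2 ^ k) by (apply pow_incr; lra). lra.
  - unfold PP in *. simpl sum_f_R0. rewrite !Rmult_plus_distr_l.
    assert (IH' := IH ltac:(lia)).
    assert (B : 0 <= binomR x (S j)) by (apply binom_nonneg; apply le_INR in Hj; lra).
    assert (t1 ^ k * t2 ^ S j <= t2 ^ k * t1 ^ S j).
    { replace k with (S j + (k - S j))%nat by lia. rewrite !pow_add.
      assert (t1 ^ (k - S j) <= t2 ^ (k - S j)) by (apply pow_incr; lra).
      assert (0 <= t1 ^ S j) by (apply pow_le; lra).
      assert (0 <= t2 ^ S j) by (apply pow_le; lra).
      assert (0 <= t1 ^ S j * t2 ^ S j) by (apply Rmult_le_pos; lra).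
      nra. }
    assert (H2 : t1^k * (binomR x (S j) * t2 ^ S j) <= t2^k*(binomR x (S j) * t1^S j)) by nra.
    simpl pow in *. lra.
Qed.

Lemma mono (f d : R -> R) (a b : R) : a <= b ->
  (forall t, a <= t <= b -> is_derive f t (d t)) -> (forall t, a <= t <= b -> 0 <= d t) ->
  f a <= f b.
Proof.
  intros Hab Hd Hpos.
  destruct (MVT_gen f a b d) as [c [Hc E]].
  - intros t Ht. rewrite Rmin_left in Ht by lra. rewrite Rmax_right in Ht by lra. apply Hd; lra.
  - intros t Ht. rewrite Rmin_left in Ht by lra. rewrite Rmax_right in Ht by lra.
    apply continuity_pt_filterlim. apply (ex_derive_continuous f t).
    exists (d t). apply Hd; lra.
  - rewrite Rmin_left in Hc by lra. rewrite Rmax_right in Hc by lra.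
    assert (0 <= d c) by (apply Hpos; lra). nra.
Qed.

Theorem lemma2p4 (k : nat) (gamma x : R) :
  (1 <= k)%nat -> 0 <= gamma <= 1 -> INR k <= x ->
  sum_f_R0 (fun i => binomR x i * gamma ^ i) k >=
  / 4 * Rpower (sum_f_R0 (fun i => binomR x i) k) (log2 (1 + gamma)).
Proof.
  intros _ Hg Hk.
  change (sum_f_R0 (fun i => binomR x i * gamma ^ i) k) with (PP x k gamma).
  replace (sum_f_R0 (fun i => binomR x i) k) with (PP x k 1).
  2:{ unfold PP. apply sum_eq. intros. rewrite pow1. ring. }
  assert (Hx0 : 0 <= x) by (pose proof (pos_INR k); lra).
  assert (Pge : forall t, 0 <= t -> 1 <= PP x k t) by (intros; apply (PP_ge1 x k); auto).
  assert (Hc : 0 <= binomR (x - 1) k) by (apply binom_nonneg; lra).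
  assert (Hl2 : 0 < ln 2) by (pose proof ln_lt_2; lra).
  set (K := ln (PP x k 1)).
  set (c := binomR (x - 1) k).
  set (h := fun t => ln (PP x k t) - K * (ln (1 + t) / ln 2)).
  set (s := fun t => x - x * c * t ^ k / PP x k t - K / ln 2).
  assert (Hd : forall t, 0 <= t -> is_derive h t (s t / (1 + t))).
  { intros t Ht. assert (P1 := Pge t Ht).
    assert (D1 : is_derive (fun u => ln (PP x k u)) t
       (scal (x * (PP x k t - c * t ^ k) / (1 + t)) (/ PP x k t))).
    { apply (is_derive_comp ln (PP x k) t (/ PP x k t) (x * (PP x k t - c * t ^ k) / (1 + t))). apply is_derive_ln. lra. apply deriv_PP. lra. }
    assert (D2 : is_derive (fun u => K * (ln (1 + u) / ln 2)) t (K * (/ (1 + t) / ln 2))).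
    { auto_derive. lra. field. split; lra. }
    assert (D := is_derive_minus _ _ _ _ _ D1 D2).
    unfold h. eapply is_derive_ext. { intro u. reflexivity. }
    replace (s t / (1 + t)) with
      (minus (scal (x * (PP x k t - c * t ^ k) / (1 + t)) (/ PP x k t)) (K * (/ (1 + t) / ln 2))).
    exact D.
    unfold minus, plus, opp, scal; simpl. unfold mult; simpl. unfold s.
    field. repeat split; lra. }
  assert (Smono : forall t1 t2, 0 <= t1 <= t2 -> s t2 <= s t1).
  { intros t1 t2 Ht. unfold s.
    assert (P1 := Pge t1 ltac:(lra)). assert (P2 := Pge t2 ltac:(lra)).
    assert (Cr := cross x k t1 t2 Hk Ht k (le_n k)).
    assert (t1 ^ k / PP x k t1 <= t2 ^ k / PP x k t2).
    { apply (Rmult_le_reg_r (PP x k t1 * PP x k t2)). nra.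
      replace (t1 ^ k / PP x k t1 * (PP x k t1 * PP x k t2)) with (t1 ^ k * PP x k t2) by (field; lra).
      replace (t2 ^ k / PP x k t2 * (PP x k t1 * PP x k t2)) with (t2 ^ k * PP x k t1) by (field; lra).
      exact Cr. }
    assert (0 <= x * c) by (apply Rmult_le_pos; auto).
    replace (x * c * t1 ^ k / PP x k t1) with (x * c * (t1 ^ k / PP x k t1)) by (field; lra).
    replace (x * c * t2 ^ k / PP x k t2) with (x * c * (t2 ^ k / PP x k t2)) by (field; lra).
    nra. }
  assert (Hh : 0 <= h gamma).
  { destruct (Rle_lt_dec 0 (s gamma)) as [Hs|Hs].
    - assert (h 0 = 0).
      { unfold h. rewrite PP_0, Rplus_0_r, ln_1. field. lra. }
      rewrite <- H. apply (mono h (fun t => s t / (1 + t))). lra.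
      intros; apply Hd; lra.
      intros t Ht. apply Rmult_le_pos. assert (s gamma <= s t) by (apply Smono; lra). lra.
      apply Rlt_le, Rinv_0_lt_compat; lra.
    - assert (h 1 = 0).
      { unfold h. fold K. replace (1 + 1) with 2 by ring. field. lra. }
      assert (- h gamma <= - h 1).
      { apply (mono (fun t => - h t) (fun t => - (s t / (1 + t)))). lra.
        intros t Ht. apply (is_derive_opp h). apply Hd; lra.
        intros t Ht. assert (s t <= s gamma) by (apply Smono; lra).
        assert (0 < / (1 + t)) by (apply Rinv_0_lt_compat; lra).
        unfold Rdiv. nra. }
      lra. }
  unfold h in Hh.
  assert (Pg := Pge gamma ltac:(lra)).
  unfold Rpower, log2. fold K.
  assert (HA : ln (1 + gamma) / ln 2 * K <= ln (PP x k gamma)) by lra.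
  assert (exp (ln (1 + gamma) / ln 2 * K) <= PP x k gamma).
  { rewrite <- (exp_ln (PP x k gamma)) by lra.
    destruct (Rle_lt_or_eq_dec _ _ HA) as [Hlt|Heq].
    - apply Rlt_le, exp_increasing; auto.
    - rewrite Heq; lra. }
  assert (0 < exp (ln (1 + gamma) / ln 2 * K)) by apply exp_pos.
  lra.
Qed.
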